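(* Let $I\subseteq\mathbb{R}$ be an interval, let $f:I\to\mathbb{R}$ be differentiable on the interior $I^\circ$ of $I$, and let $a,b\in I$ with $a<b$ and $f'\in L^1[a,b]$. Let $s\in(0,1]$, $\alpha\in[0,1]$, $m\in(0,1]$, assume $b/m\in I^\circ$, and let $p>1$ and $q=\frac{p}{p-1}$. If $|f'|^q$ is $s$-$(\alpha,m)$-convex (in the first sense) on $[a,b]$, then $$\left|\frac{f(a)+f(b)}{2}-\frac{1}{b-a}\int_a^b f(x)\,dx\right|\le (b-a)\left[\frac{2}{(p+1)(p+2)}\right]^{1/p}\left(\frac{|f'(a)|^q+m\alpha s\left|f'\!\left(\frac{b}{m}\right)\right|^q}{\alpha s+1}\right)^{1/q}.$$
   Context: Let $s\in(0,1]$, $\alpha\in[0,1]$, $m\in(0,1]$. A nonnegative function $g$ is called $s$-$(\alpha,m)$-convex (in the first sense) on $[a,b]$ if for all $x,y\in[a,b]$ (with $y/m$ in the domain of $g$) and all $t\in[0,1]$, $$g(tx+(1-t)y)\le t^{\alpha s}g(x)+m\,(1-t^{\alpha s})\,g\!\left(\frac{y}{m}\right).$$ *)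

(* Defs.v *)
From HB Require Import structures.
From mathcomp Require Import all_boot all_order all_algebra.
From mathcomp Require Import all_classical all_reals all_analysis.
Set Implicit Arguments. Unset Strict Implicit. Unset Printing Implicit Defensive.
Import Order.TTheory GRing.Theory Num.Theory.
Import numFieldNormedType.Exports.
Local Open Scope classical_set_scope.
Local Open Scope ring_scope.

(* g is s-(alpha,m)-convex (first sense) on [a,b]; D is the domain of g
   (used for the side condition "y/m in the domain of g"). g is nonnegative. *)
Definition s_alpha_m_convex (R : realType) (s alpha m : R) (D : set R)
  (g : R -> R) (a b : R) : Prop :=
  (forall x, D x -> 0 <= g x) /\
  (forall x y t : R, a <= x <= b -> a <= y <= b -> D (y / m) -> 0 <= t <= 1 ->
     g (t * x + (1 - t) * y)
       <= t `^ (alpha * s) * g x + m * (1 - t `^ (alpha * s)) * g (y / m)).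

(* Main.v *)
Require Import Defs.
From HB Require Import structures.
From mathcomp Require Import all_boot all_order all_algebra.
From mathcomp Require Import all_classical all_reals all_analysis.
From mathcomp Require Import ring lra.
Import Order.TTheory GRing.Theory Num.Theory.
Import numFieldNormedType.Exports.
Local Open Scope classical_set_scope.
Local Open Scope ring_scope.

Lemma der_scal {R : realType} {u : R -> R} {x du : R} (k : R) :
  is_derive x 1 u du -> is_derive x 1 (fun y => k * u y) (k * du).
Proof. move=> h; exact: (@is_deriveZ R R^o R^o u k x 1 du h). Qed.

Lemma der_add {R : realType} {u v : R -> R} {x du dv : R} :
  is_derive x 1 u du -> is_derive x 1 v dv ->
  is_derive x 1 (fun y => u y + v y) (du + dv).
Proof. move=> hu hv; exact: (is_deriveD hu hv). Qed.

Lemma der_mul {R : realType} {u v : R -> R} {x du dv : R} :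
  is_derive x 1 u du -> is_derive x 1 v dv ->
  is_derive x 1 (fun y => u y * v y) (u x * dv + v x * du).
Proof. move=> hu hv; exact: (is_deriveM hu hv). Qed.

Lemma der_sub {R : realType} {u v : R -> R} {x du dv : R} :
  is_derive x 1 u du -> is_derive x 1 v dv ->
  is_derive x 1 (fun y => u y - v y) (du - dv).
Proof. move=> hu hv; exact: (is_deriveB hu hv). Qed.

Lemma der_id {R : realType} (x : R) : is_derive x 1 (fun y : R => y) 1.
Proof. exact: is_derive_id. Qed.

Lemma der_cst {R : realType} (x k : R) : is_derive x 1 (fun y : R => k) 0.
Proof. exact: (is_derive_cst k x 1). Qed.

Lemma der_ext {R : realType} {u : R -> R} {x d d' : R} :
  is_derive x 1 u d -> d = d' -> is_derive x 1 u d'.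
Proof. by move=> h <-. Qed.
Lemma pw_cont {R : realType} (e : R) : 1 <= e ->
  continuous (fun y : R => (Num.max y 0) `^ e).
Proof.
move=> e1 y0.
have e0 : e != 0 by rewrite gt_eqF// (lt_le_trans ltr01 e1).
have [y0n|y0p|y00] := ltgtP y0 0.
- have h0 : (Num.max y0 0) `^ e = 0 by rewrite max_r ?ltW// powR0.
  apply/cvgrPdist_le => eps eps0; near=> y; rewrite /= h0.
  rewrite max_r ?powR0 ?subrr ?normr0 ?ltW//.
  by near: y; exact: lt_nbhsl.
- have : {for y0, continuous (@powR R ^~ e)}.
    apply: differentiable_continuous; apply/derivable1_diffP.
    by apply: derivable_powR; rewrite in_itv/= y0p.
  rewrite /continuous_at /= max_l ?ltW//; apply: cvg_trans; apply: near_eq_cvg.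
  near=> y => /=; rewrite max_l// ltW//.
  by near: y; exact: lt_nbhsr.
- apply/cvgrPdist_le => eps eps0; near=> y.
  rewrite /= y00 maxxx powR0// sub0r normrN ger0_norm ?powR_ge0//.
  have [yle|ygt] := leP y 0; first by rewrite powR0// ltW.
  have y1 : `|y| <= Num.min eps 1.
    near: y; rewrite y00.
    have h1 : 0 < Num.min eps 1 by rewrite lt_min eps0 ltr01.
    exact: (@nbhs0_le R R^o _ h1).
  have ye : y <= eps.
    apply: le_trans (ler_norm y) _; apply: le_trans y1 _; by rewrite ge_min lexx.
  have y1' : y <= 1.
    apply: le_trans (ler_norm y) _; apply: le_trans y1 _; by rewrite ge_min lexx orbT.
  by rewrite (le_trans _ ye)// ge1r_powR// ygt y1'.
Unshelve. all: by end_near. Qed.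
Lemma cmp_mvt {R : realType} (P Q dP dQ : R -> R) (u v : R) : u <= v ->
  (forall x, x \in `]u, v[ -> is_derive x 1 P (dP x)) ->
  (forall x, x \in `]u, v[ -> is_derive x 1 Q (dQ x)) ->
  {within `[u, v], continuous P} -> {within `[u, v], continuous Q} ->
  (forall x, x \in `]u, v[ -> `|dP x| <= dQ x) ->
  `|P v - P u| <= Q v - Q u.
Proof.
rewrite le_eqVlt => /predU1P[->|uv] dPd dQd cP cQ hle.
  by rewrite !subrr normr0.
have [c1 c1i e1] := @MVT R (Q - P) (dQ - dP) u v uv
  (fun x hx => is_deriveB (dQd x hx) (dPd x hx))
  (fun x => continuousB (cQ x) (cP x)).
have [c2 c2i e2] := @MVT R (Q + P) (dQ + dP) u v uv
  (fun x hx => is_deriveD (dQd x hx) (dPd x hx))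
  (fun x => continuousD (cQ x) (cP x)).
move: e1 e2; rewrite !fctE => e1 e2.
have h1 := hle _ c1i; have h2 := hle _ c2i.
have uv' : 0 <= v - u by rewrite subr_ge0 ltW.
rewrite ler_norml; apply/andP; split.
- have : 0 <= (dQ c2 + dP c2) * (v - u).
    apply: mulr_ge0 => //.
    have hn : - dP c2 <= `|dP c2| by rewrite -normrN ler_norm.
    lra.
  rewrite -e2; lra.
- have : 0 <= (dQ c1 - dP c1) * (v - u).
    apply: mulr_ge0 => //.
    have hn : dP c1 <= `|dP c1| by rewrite ler_norm.
    lra.
  rewrite -e1; lra.
Qed.
Lemma aff_derive {R : realType} (k c x : R) : is_derive x 1 (fun y : R => k * y + c) k.
Proof.
have h1 : is_derive x 1 (fun y : R => k * y) k.
  have := @is_deriveZ R R^o R^o id k x 1 1 (is_derive_id _ _).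
  by rewrite [X in is_derive _ _ _ X]mulr1.
have := is_deriveD h1 (is_derive_cst c x 1).
by rewrite addr0.
Qed.

Lemma pw_derive {R : realType} (e k c x : R) : 0 < k * x + c ->
  is_derive x 1 (fun y => (Num.max (k * y + c) 0) `^ e)
    (e * (k * x + c) `^ (e - 1) * k).
Proof.
move=> h.
have gc : continuous (fun y : R => k * y + c).
  move=> z; apply: differentiable_continuous; apply/derivable1_diffP.
  by have [] := aff_derive k c z.
apply: (@near_eq_is_derive _ _ _ ((@powR R ^~ e) \o (fun y => k * y + c))).
  have hn : \forall z \near (k * x + c), 0 < z := lt_nbhsr h.
  have gx : (fun y => k * y + c) @ x --> k * x + c := gc x.
  near=> y; rewrite /= max_l// ltW//; near: y; exact: (gx _ hn).
apply: is_derive1_comp; [exact: is_derive1_powR | exact: aff_derive].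
Unshelve. all: by end_near. Qed.
Ltac neq0 := repeat (apply/andP; split); apply/negP => /eqP ?; lra.

Lemma ln2_ge {R : realType} : 2^-1 <= ln (2 : R).
Proof.
have h : 1 + (- 2^-1) <= expR (- 2^-1 : R) := expR_ge1Dx _.
rewrite -ler_expR lnK ?posrE//.
rewrite expRN in h.
have e0 : 0 < expR (2^-1 : R) := expR_gt0 _.
have : (1 + - 2^-1) * expR (2^-1 : R) <= 1.
  by rewrite -ler_pdivlMr// div1r.
lra.
Qed.

Lemma bern2 {R : realType} (p : R) : 0 <= p -> 1 + p / 2 <= 2 `^ p.
Proof.
move=> p0; rewrite /powR (negbTE (lt0r_neq0 _)) ?ltr0n//.
apply: le_trans (expR_ge1Dx _).
have := @ln2_ge R => h.
have : p * 2^-1 <= p * ln 2 by rewrite ler_wpM2l.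
lra.
Qed.

Lemma inv_powR (R : realType) (x r : R) : 0 < x -> (x^-1) `^ r = (x `^ r)^-1.
Proof.
move=> x0; rewrite -powR_inv1 ?ltW// -powRrM mulN1r powRN//.
Qed.

Lemma half_le {R : realType} (p : R) : 1 < p ->
  1 <= 2 * (2 / (p + 2)) `^ p^-1.
Proof.
move=> p1; have p0 : 0 < p by lra.
have h2 : (2^-1 : R) `^ p <= 2 / (p + 2).
  rewrite inv_powR//.
  have := @bern2 R p (ltW p0) => hb.
  have t0 : 0 < (2 : R) `^ p by apply: powR_gt0.
  rewrite ler_pdivlMr; last lra.
  rewrite mulrC ler_pdivrMr//; lra.
have hp : 0 <= p^-1 by rewrite invr_ge0 ltW.
have := @ge0_ler_powR R p^-1 hp (2^-1 `^ p) (2 / (p+2)).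
rewrite -powRrM mulfV ?gt_eqF// powRr1 ?invr_ge0 ?ler0n//.
rewrite !nnegrE powR_ge0 divr_ge0 ?ler0n//; last lra.
move=> /(_ isT isT h2) h.
lra.
Qed.

Lemma final_num {R : realType} (p K L X : R) : 1 < p -> 0 <= K -> 0 < L ->
  (forall c : R, 0 < c ->
     X <= L * (c `^ p / (p * (p + 1)) + (c^-1) `^ (p / (p - 1)) * K / (p / (p - 1)))) ->
  X <= 2 * L * (2 / ((p + 1) * (p + 2))) `^ p^-1 * K `^ (p / (p - 1))^-1.
Proof.
move=> p1 K0 L0 H.
set q := p / (p - 1).
have p0 : 0 < p by lra.
have pm1 : 0 < p - 1 by lra.
have q0 : 0 < q by rewrite /q divr_gt0.
have qinv : q^-1 = 1 - p^-1 by rewrite /q invf_div; field; lra.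
have pp0 : 0 < p * (p + 1) by apply: mulr_gt0; lra.
have [K00|Kpos] := eqVneq K 0.
  rewrite K00 powR0 ?mulr0; last by rewrite invr_eq0 gt_eqF.
  apply/ler_addgt0Pr => e e0; rewrite add0r.
  set c := (e * (p * (p + 1)) / L) `^ p^-1.
  have ce : c `^ p = e * (p * (p + 1)) / L.
    rewrite /c -powRrM mulVf ?gt_eqF// powRr1//.
    by rewrite divr_ge0 ?ltW// mulr_gt0.
  have c0 : 0 < c by rewrite powR_gt0// divr_gt0// mulr_gt0.
  have := H c c0; rewrite ce K00 mulr0 mul0r addr0 => hX.
  apply: (le_trans hX); rewrite le_eqVlt; apply/orP; left; apply/eqP.
  by field; neq0.
have K0' : 0 < K by rewrite lt_neqAle eq_sym Kpos.
set Z := K * (p + 1).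
have Z0 : 0 < Z by rewrite mulr_gt0//; lra.
set c := Z `^ (p * q)^-1.
have c0 : 0 < c by rewrite powR_gt0.
set zp := Z `^ p^-1.
have zp0 : 0 < zp by rewrite powR_gt0.
have cp : c `^ p = Z / zp.
  rewrite /c -powRrM (_ : (p * q)^-1 * p = 1 - p^-1); last first.
    by rewrite -qinv invfM mulrAC mulVf ?gt_eqF// mul1r.
  rewrite powRB ?(gt_eqF Z0) ?implybT// powRr1 ?ltW//.
have cq : (c^-1) `^ q = zp^-1.
  rewrite inv_powR// /c -powRrM (_ : (p * q)^-1 * q = p^-1)//.
  by rewrite invfM -mulrA mulVf ?gt_eqF// mulr1.
have := H c c0; rewrite cp cq => hX; apply: (le_trans hX).
have -> : L * (Z / zp / (p * (p + 1)) + zp^-1 * K / q) = L * K / zp.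
  by rewrite /Z /q; field; neq0.
set kp := K `^ p^-1.
have kp0 : 0 < kp by rewrite powR_gt0.
have Kq : K `^ q^-1 = K / kp.
  by rewrite qinv powRB ?(gt_eqF K0') ?implybT// powRr1 ?ltW.
have sp0 : 0 < (p + 1) `^ p^-1 by rewrite powR_gt0//; lra.
have zpE : zp = kp * (p + 1) `^ p^-1 by rewrite /zp /Z powRM ?ltW//; lra.
rewrite Kq zpE.
have hh := @half_le R p p1.
rewrite (_ : 2 / (p + 2) = (p + 1) * (2 / ((p + 1) * (p + 2)))) in hh; last first.
  by field; neq0.
rewrite powRM in hh; last 2 first.
- lra.
- by rewrite divr_ge0// mulr_ge0//; lra.
set C := (2 / ((p + 1) * (p + 2))) `^ p^-1 in hh *.
set S := (p + 1) `^ p^-1 in hh sp0 *.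
have C0 : 0 <= C by apply: powR_ge0.
rewrite -subr_ge0.
have -> : 2 * L * C * (K / kp) - L * K / (kp * S) = L * K / (kp * S) * (2 * S * C - 1).
  by field; neq0.
apply: mulr_ge0; last lra.
by rewrite divr_ge0 ?mulr_ge0 ?ltW.
Qed.
Lemma cont_id {R : realType} : continuous (fun y : R => y).
Proof. by move=> x; exact: cvg_id. Qed.

Lemma cont_scal {R : realType} (u : R -> R) (k : R) :
  continuous u -> continuous (fun y => k * u y).
Proof. move=> hu x; exact: (@continuousZl_tmp R R^o R u k x (hu x)). Qed.

Lemma cont_add {R : realType} (u v : R -> R) :
  continuous u -> continuous v -> continuous (fun y => u y + v y).
Proof. move=> hu hv x; exact: (continuousD (hu x) (hv x)). Qed.

Lemma pw_aff_cont {R : realType} (e k c : R) : 1 <= e ->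
  continuous (fun y => (Num.max (k * y + c) 0) `^ e).
Proof.
move=> e1 x.
apply: (@continuous_comp _ _ _ (fun y => k * y + c) (fun z => (Num.max z 0) `^ e)).
  by apply: cont_add; [apply: cont_scal; exact: cont_id | move=> z; exact: cvg_cst].
exact: pw_cont.
Qed.

Lemma core {R : realType} {f : R -> R} {a b m p r A B c : R} :
  a < b -> 1 < p -> 0 < c -> 0 <= r -> 0 <= m -> 0 <= A -> 0 <= B ->
  (forall x, a <= x <= b -> derivable f x 1) ->
  (forall t, 0 < t < 1 -> `|derive1 f (t * a + (1 - t) * b)| `^ (p / (p - 1))
      <= t `^ r * A + m * (1 - t `^ r) * B) ->
  `|(f a + f b) / 2 - (b - a)^-1 * Rintegral (@lebesgue_measure R) `[a, b] f|
   <= (b - a) / 2 * (c `^ p / (p * (p + 1)) +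
        (c^-1) `^ (p / (p - 1)) * ((A + m * r * B) / (r + 1)) / (p / (p - 1))).
Proof.
move=> ab p1 c0 r0 m0 A0 B0 fd hg.
set q := p / (p - 1).
have ab' : a <= b := ltW ab.
have ba0 : 0 < b - a by rewrite subr_gt0.
have p0 : 0 < p by lra.
have pm1 : 0 < p - 1 by lra.
have q0 : 0 < q by rewrite /q divr_gt0.
have pq : p^-1 + q^-1 = 1 by rewrite /q invf_div; field; neq0.
have fcont : forall x, a <= x <= b -> {for x, continuous f}.
  move=> x hx; apply: differentiable_continuous; apply/derivable1_diffP.
  exact: fd.
have fcw : {within `[a, b], continuous f}.
  apply: continuous_in_subspaceT => x; rewrite inE /= in_itv /= => hx.
  exact: fcont.
have fint : (@lebesgue_measure R).-integrable `[a, b] (EFin \o f).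
  by apply: continuous_compact_integrable; [exact: segment_compact | exact: fcw].
pose F := fun x => (\int[@lebesgue_measure R]_(t in `[a, x]) f t)%R.
have Fd : forall x, a < x < b -> is_derive x 1 F (f x).
  move=> x /andP[ax xb].
  have hx' : a <= x <= b by rewrite !ltW.
  have [dF F'] := continuous_FTC1_closed xb fint ax (fcont x hx').
  apply: DeriveDef; first exact: dF.
  by rewrite -derive1E; apply: F'.
have Fc : {within `[a, b], continuous F} := parameterized_integral_continuous ab' fint.
have Fa : F a = 0 by rewrite /F set_itv1 Rintegral_set1.
pose mid := (a + b) / 2.
pose L := (b - a) / 2.
have L0 : 0 < L by rewrite divr_gt0.
pose P := fun x => (x - mid) * f x - F x.
have Pd : forall x, a < x < b -> is_derive x 1 P ((x - mid) * derive1 f x).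
  move=> x hx.
  have hf : is_derive x 1 f (derive1 f x).
    rewrite derive1E; apply: derivableP; apply: fd.
    by case/andP: hx => h1 h2; rewrite !ltW.
  have h1 : is_derive x 1 (fun y => y - mid) 1.
    exact: der_ext (der_sub (der_id x) (der_cst x mid)) (subr0 1).
  apply: der_ext (der_sub (der_mul h1 hf) (Fd x hx)) _.
  by rewrite /=; ring.
have Pc : {within `[a, b], continuous P}.
  have hc1 : {within `[a, b], continuous (fun y => y - mid)}.
    apply: continuous_in_subspaceT => y _.
    exact: (continuousB (cont_id y) (cvg_cst mid)).
  move=> y; exact: (continuousB (continuousM (hc1 y) (fcw y)) (Fc y)).
pose t := fun x : R => - (b - a)^-1 * x + b / (b - a).
pose Gd := fun x => (A - m * B) * (t x) `^ r + m * B.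
have tx : forall x, a < x < b -> 0 < t x < 1.
  move=> x /andP[ax xb]; rewrite /t.
  have e : - (b - a)^-1 * x + b / (b - a) = (b - x) / (b - a) by field; neq0.
  rewrite e; apply/andP; split; first by rewrite divr_gt0// subr_gt0.
  by rewrite ltr_pdivrMr// mul1r; lra.
have young : forall x w, a < x < b -> 0 <= w -> `|x - mid| = L * w ->
    `|(x - mid) * derive1 f x| <= L * (c `^ p * w `^ p / p + (c^-1) `^ q / q * Gd x).
  move=> x w hx w0 hw.
  have xe : t x * a + (1 - t x) * b = x by rewrite /t; field; neq0.
  have hgx := hg (t x) (tx x hx); rewrite xe in hgx.
  rewrite normrM hw -[L * w * _]mulrA ler_pM2l//.
  have cn : c != 0 by rewrite gt_eqF.
  have e : w * `|derive1 f x| = (c * w) * (c^-1 * `|derive1 f x|) by field.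
  rewrite e.
  have cw0 : 0 <= c * w by rewrite mulr_ge0// ltW.
  have cf0 : 0 <= c^-1 * `|derive1 f x| by rewrite mulr_ge0// invr_ge0 ltW.
  apply: le_trans (conjugate_powR cw0 cf0 p0 q0 pq) _.
  have ci0 : 0 <= c^-1 by rewrite invr_ge0 ltW.
  rewrite (@powRM R c w p (ltW c0) w0) (@powRM R c^-1 _ q ci0 (normr_ge0 _)).
  rewrite lerD2l.
  have hq : 0 <= c^-1 `^ q / q by rewrite divr_ge0 ?powR_ge0 ?ltW.
  have -> : c^-1 `^ q * `|derive1 f x| `^ q / q = c^-1 `^ q / q * `|derive1 f x| `^ q.
    by ring.
  apply: (ler_wpM2l hq).
  apply: (le_trans hgx); rewrite /Gd le_eqVlt; apply/orP; left; apply/eqP; ring.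
pose K1 := (A - m * B) * (b - a) / (r + 1).
pose G := fun x => - K1 * (Num.max (- (b - a)^-1 * x + b / (b - a)) 0) `^ (r + 1)
  + m * B * x.
have Gder : forall x, a < x < b -> is_derive x 1 G (Gd x).
  move=> x hx.
  have h0 : 0 < - (b - a)^-1 * x + b / (b - a) by case/andP: (tx x hx).
  have h := pw_derive (r + 1) (- (b - a)^-1) (b / (b - a)) x h0.
  apply: der_ext (der_add (der_scal (- K1) h) (der_scal (m * B) (der_id x))) _.
  by rewrite addrK mulr1 /Gd /t /K1; field; neq0.
have Gc : continuous G.
  apply: cont_add; first by apply: cont_scal; apply: pw_aff_cont; lra.
  by apply: cont_scal; exact: cont_id.
pose C1 := c `^ p * L / (p * (p + 1)).
pose D := (c^-1) `^ q / q.
pose w1 := fun x : R => L^-1 * x + - (mid / L).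
pose w2 := fun x : R => - L^-1 * x + mid / L.
pose Q1 := fun x => L * (C1 * (Num.max (L^-1 * x + - (mid / L)) 0) `^ (p + 1) + D * G x).
pose Q2 := fun x => L * (- C1 * (Num.max (- L^-1 * x + mid / L) 0) `^ (p + 1) + D * G x).
pose Q1d := fun x => L * (c `^ p * (w1 x) `^ p / p + D * Gd x).
pose Q2d := fun x => L * (c `^ p * (w2 x) `^ p / p + D * Gd x).
have Q1der : forall x, mid < x < b -> is_derive x 1 Q1 (Q1d x).
  move=> x /andP[mx xb].
  have hx : a < x < b by apply/andP; split; rewrite /mid in mx; lra.
  have h0 : 0 < L^-1 * x + - (mid / L).
    have -> : L^-1 * x + - (mid / L) = (x - mid) / L by field; neq0.
    by rewrite divr_gt0// subr_gt0.
  have h := pw_derive (p + 1) (L^-1) (- (mid / L)) x h0.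
  apply: der_ext (der_scal L (der_add (der_scal C1 h) (der_scal D (Gder x hx)))) _.
  by rewrite addrK /Q1d /w1 /C1; field; neq0.
have Q2der : forall x, a < x < mid -> is_derive x 1 Q2 (Q2d x).
  move=> x /andP[ax xm].
  have hx : a < x < b by apply/andP; split; rewrite /mid in xm; lra.
  have h0 : 0 < - L^-1 * x + mid / L.
    have -> : - L^-1 * x + mid / L = (mid - x) / L by field; neq0.
    by rewrite divr_gt0// subr_gt0.
  have h := pw_derive (p + 1) (- L^-1) (mid / L) x h0.
  apply: der_ext (der_scal L (der_add (der_scal (- C1) h) (der_scal D (Gder x hx)))) _.
  by rewrite addrK /Q2d /w2 /C1; field; neq0.
have Q1c : continuous Q1.
  apply: cont_scal; apply: cont_add; last exact: cont_scal.
  by apply: cont_scal; apply: pw_aff_cont; lra.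
have Q2c : continuous Q2.
  apply: cont_scal; apply: cont_add; last exact: cont_scal.
  by apply: cont_scal; apply: pw_aff_cont; lra.
have amid : a < mid by rewrite /mid; lra.
have midb : mid < b by rewrite /mid; lra.
have sub1 : `[mid, b] `<=` `[a, b].
  by move=> y; rewrite /= !in_itv /= => /andP[h1 h2]; apply/andP; split; lra.
have sub2 : `[a, mid] `<=` `[a, b].
  by move=> y; rewrite /= !in_itv /= => /andP[h1 h2]; apply/andP; split; lra.
have I1 : `|P b - P mid| <= Q1 b - Q1 mid.
  have d1 : forall x, x \in `]mid, b[ -> is_derive x 1 P ((x - mid) * derive1 f x).
    move=> x; rewrite in_itv /= => /andP[h1 h2]; apply: Pd; apply/andP; split; lra.
  have d2 : forall x, x \in `]mid, b[ -> is_derive x 1 Q1 (Q1d x).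
    by move=> x; rewrite in_itv /=; exact: Q1der.
  have c1 : {within `[mid, b], continuous P} by exact: continuous_subspaceW sub1 Pc.
  have c2 : {within `[mid, b], continuous Q1}.
    by apply: continuous_in_subspaceT => y _; exact: Q1c.
  have l1 : forall x, x \in `]mid, b[ -> `|(x - mid) * derive1 f x| <= Q1d x.
    move=> x; rewrite in_itv /= => /andP[h1 h2].
    have hx : a < x < b by apply/andP; split; lra.
    have e : w1 x = (x - mid) / L by rewrite /w1; field; neq0.
    apply: young => //.
      by rewrite e divr_ge0 ?subr_ge0 ?ltW.
    by rewrite e gtr0_norm ?subr_gt0//; field; neq0.
  exact: (@cmp_mvt R P Q1 _ Q1d mid b (ltW midb) d1 d2 c1 c2 l1).
have I2 : `|P mid - P a| <= Q2 mid - Q2 a.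
  have d1 : forall x, x \in `]a, mid[ -> is_derive x 1 P ((x - mid) * derive1 f x).
    move=> x; rewrite in_itv /= => /andP[h1 h2]; apply: Pd; apply/andP; split; lra.
  have d2 : forall x, x \in `]a, mid[ -> is_derive x 1 Q2 (Q2d x).
    by move=> x; rewrite in_itv /=; exact: Q2der.
  have c1 : {within `[a, mid], continuous P} by exact: continuous_subspaceW sub2 Pc.
  have c2 : {within `[a, mid], continuous Q2}.
    by apply: continuous_in_subspaceT => y _; exact: Q2c.
  have l1 : forall x, x \in `]a, mid[ -> `|(x - mid) * derive1 f x| <= Q2d x.
    move=> x; rewrite in_itv /= => /andP[h1 h2].
    have hx : a < x < b by apply/andP; split; lra.
    have e : w2 x = (mid - x) / L by rewrite /w2; field; neq0.
    apply: young => //.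
      by rewrite e divr_ge0 ?subr_ge0 ?ltW.
    by rewrite e ltr0_norm ?subr_lt0//; field; neq0.
  exact: (@cmp_mvt R P Q2 _ Q2d a mid (ltW amid) d1 d2 c1 c2 l1).
have hW1b : (Num.max (L^-1 * b + - (mid / L)) 0) `^ (p + 1) = 1.
  have -> : L^-1 * b + - (mid / L) = 1 by rewrite /L /mid; field; neq0.
  by rewrite max_l ?ler01 // powR1.
have hW1m : (Num.max (L^-1 * mid + - (mid / L)) 0) `^ (p + 1) = 0.
  have -> : L^-1 * mid + - (mid / L) = 0 by rewrite /L; field; neq0.
  rewrite maxxx powR0 //; apply/negP => /eqP ?; lra.
have hW2m : (Num.max (- L^-1 * mid + mid / L) 0) `^ (p + 1) = 0.
  have -> : - L^-1 * mid + mid / L = 0 by rewrite /L; field; neq0.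
  rewrite maxxx powR0 //; apply/negP => /eqP ?; lra.
have hW2a : (Num.max (- L^-1 * a + mid / L) 0) `^ (p + 1) = 1.
  have -> : - L^-1 * a + mid / L = 1 by rewrite /L /mid; field; neq0.
  by rewrite max_l ?ler01 // powR1.
have hGb : G b = m * B * b.
  rewrite /G.
  have -> : - (b - a)^-1 * b + b / (b - a) = 0 by field; neq0.
  rewrite maxxx powR0; last by apply/negP => /eqP ?; lra.
  by rewrite mulr0 add0r.
have hGa : G a = - K1 + m * B * a.
  rewrite /G.
  have -> : - (b - a)^-1 * a + b / (b - a) = 1 by field; neq0.
  by rewrite max_l ?ler01 // powR1 mulr1.
have Pba : P b - P a = (b - a) * ((f a + f b) / 2 - (b - a)^-1 *
    Rintegral (@lebesgue_measure R) `[a, b] f).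
  rewrite /P Fa /F /mid; field; neq0.
have tri : `|P b - P a| <= `|P b - P mid| + `|P mid - P a|.
  rewrite (_ : P b - P a = (P b - P mid) + (P mid - P a)); last by ring.
  exact: ler_normD.
have tot := le_trans tri (lerD I1 I2).
have val : (Q1 b - Q1 mid) + (Q2 mid - Q2 a) = (b - a) * ((b - a) / 2 * (c `^ p / (p * (p + 1)) +
        (c^-1) `^ q * ((A + m * r * B) / (r + 1)) / q)).
  rewrite /Q1 /Q2 /= hW1b hW1m hW2m hW2a hGb hGa /C1 /D /K1 /L; field; neq0.
rewrite val Pba normrM (gtr0_norm ba0) ler_pM2l // in tot.
Qed.

Lemma interior_itv {R : realType} {I : set R} {a b x : R} :
  is_interval I -> I a -> I b -> a < x < b -> interior I x.
Proof.
move=> HI Ia Ib /andP[ax xb].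
rewrite /interior; near=> y.
apply: (HI a b Ia Ib); apply/andP; split; apply: ltW.
- by near: y; exact: lt_nbhsr.
- by near: y; exact: lt_nbhsl.
Unshelve. all: by end_near. Qed.

Theorem theorem5 (R : realType) (I : set R) (f : R -> R) (a b s alpha m p : R) :
  is_interval I ->
  (forall x, interior I x -> derivable f x 1) ->
  I a -> I b -> a < b ->
  derivable f a 1 -> derivable f b 1 ->
  (@lebesgue_measure R).-integrable `[a, b] (fun x => (derive1 f x)%:E) ->
  0 < s <= 1 -> 0 <= alpha <= 1 -> 0 < m <= 1 ->
  interior I (b / m) ->
  1 < p ->
  let q := p / (p - 1) in
  s_alpha_m_convex s alpha m (interior I) (fun x => `|derive1 f x| `^ q) a b ->
  `| (f a + f b) / 2 - (b - a)^-1 * Rintegral (@lebesgue_measure R) `[a, b] f |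
    <= (b - a) * (2 / ((p + 1) * (p + 2))) `^ p^-1
       * ((`|derive1 f a| `^ q + m * alpha * s * `|derive1 f (b / m)| `^ q)
           / (alpha * s + 1)) `^ q^-1.
Proof.
move=> HI hdI Ia Ib ab hda hdb _ /andP[s0 s1] /andP[al0 al1] /andP[m0 m1] hbm p1 q
  [_ hconv].
have fd : forall x, a <= x <= b -> derivable f x 1.
  move=> x /andP[]; rewrite le_eqVlt => /predU1P[<-//|ax].
  rewrite le_eqVlt => /predU1P[->//|xb].
  apply: hdI; have hx : a < x < b by rewrite ax xb.
  exact: (interior_itv HI Ia Ib hx).
have hg : forall t, 0 < t < 1 -> `|derive1 f (t * a + (1 - t) * b)| `^ (p / (p - 1))
      <= t `^ (alpha * s) * `|derive1 f a| `^ q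
         + m * (1 - t `^ (alpha * s)) * `|derive1 f (b / m)| `^ q.
  move=> t /andP[t0 t1]; apply: hconv => //.
  - by rewrite lexx ltW.
  - by rewrite lexx ltW.
  - by rewrite !ltW.
have r0 : 0 <= alpha * s by rewrite mulr_ge0// ltW.
have A0 : 0 <= `|derive1 f a| `^ q by apply: powR_ge0.
have B0 : 0 <= `|derive1 f (b / m)| `^ q by apply: powR_ge0.
have K0 : 0 <= (`|derive1 f a| `^ q + m * alpha * s * `|derive1 f (b / m)| `^ q)
           / (alpha * s + 1).
  have m0' : 0 <= m by exact: ltW.
  have s0' : 0 <= s by exact: ltW.
  apply: divr_ge0; last by rewrite addr_ge0.
  apply: addr_ge0; first exact: A0.
  apply: mulr_ge0; last exact: B0.
  apply: mulr_ge0; last exact: s0'.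
  exact: mulr_ge0 m0' al0.
have L0 : 0 < (b - a) / 2 by rewrite divr_gt0// subr_gt0.
have := @final_num R p _ ((b - a) / 2)
  (`|(f a + f b) / 2 - (b - a)^-1 * Rintegral (@lebesgue_measure R) `[a, b] f|) p1 K0 L0.
rewrite (_ : 2 * ((b - a) / 2) = b - a); last by field.
apply => c c0.
have h := core ab p1 c0 r0 (ltW m0) A0 B0 fd hg.
by rewrite [m * (alpha * s)]mulrA in h.
Qed.
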